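(* Consider $\min_{x\in\mathbb{R}^p,z\in\mathbb{R}^N}F(x,z):=f(x,z)+g(x)+h(z)$, where: (i) $f$ is differentiable with $M$-Lipschitz joint gradient, i.e. $\|(\nabla_xf(x_1,z_1)-\nabla_xf(x_2,z_2),\nabla_zf(x_1,z_1)-\nabla_zf(x_2,z_2))\|\le M\|(x_1-x_2,z_1-z_2)\|$ for all arguments and some $M>0$, and $g:\mathbb{R}^p\to\mathbb{R}\cup\{\infty\}$, $h:\mathbb{R}^N\to\mathbb{R}\cup\{\infty\}$ are proper, lower semicontinuous and directionally differentiable; (ii) $F$ is bounded below; (iii) $g$ and $h$ are prox-bounded, i.e. $g+\frac\eta2\|\cdot\|^2$ and $h+\frac\eta2\|\cdot\|^2$ are bounded below for some $\eta>0$. Let $\{(x_t,z_t,\eta_t^x,\eta_t^z):t\ge0\}$ be generated by the following algorithm (GPALM), run indefinitely: fix an integer $r\ge1$, $\rho_1,\rho_2>1$, $\sigma_1,\sigma_2\in(0,1)$, $0<\underline\eta\le\overline\eta$, a starting point $(x_0,z_0)$, and $\hat\eta_0^x=\hat\eta_0^z=1$. At iteration $t$, for $l=0,1,2,\dots$ set $\eta_t^x=\rho_1^l\hat\eta_t^x$, $\eta_t^z=\rho_2^l\hat\eta_t^z$ and compute $$x_{t+1}\in\operatorname{Prox}_{g/\eta_t^x}\Big(x_t-\tfrac1{\eta_t^x}\nabla_xf(x_t,z_t)\Big),\quad z_{t+1}\in\operatorname{Prox}_{h/\eta_t^z}\Big(z_t-\tfrac1{\eta_t^z}\nabla_zf(x_{t+1},z_t)\Big),$$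 stopping at the first $l$ for which $$F(x_{t+1},z_{t+1})\le\max\{F(x_{t-r+1},z_{t-r+1}),\dots,F(x_t,z_t)\}-\tfrac{\sigma_1}2\eta_t^x\|x_{t+1}-x_t\|^2-\tfrac{\sigma_2}2\eta_t^z\|z_{t+1}-z_t\|^2$$ (only indices $\ge0$ in the maximum). Then set $$\hat\eta_{t+1}^x=\min\Big\{\overline\eta,\max\Big\{\underline\eta,\tfrac{\langle x_{t+1}-x_t,\nabla_xf(x_{t+1},z_{t+1})-\nabla_xf(x_t,z_t)\rangle}{\|x_{t+1}-x_t\|^2}\Big\}\Big\},$$ $$\hat\eta_{t+1}^z=\min\Big\{\overline\eta,\max\Big\{\underline\eta,\tfrac{\langle z_{t+1}-z_t,\nabla_zf(x_{t+1},z_{t+1})-\nabla_zf(x_{t+1},z_t)\rangle}{\|z_{t+1}-z_t\|^2}\Big\}\Big\}.$$ If the generated sequence $\{(x_t,z_t)\}$ is bounded and $F$ is continuous on a compact set containing the sequence, then any accumulation point of $\{(x_t,z_t)\}$ is a d-stationary point of $F$.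
   Context: $\|\cdot\|$ is the Euclidean norm. $\operatorname{Prox}_{\phi/\eta}(y):=\operatorname{argmin}_u\{\tfrac1\eta\phi(u)+\tfrac12\|u-y\|^2\}$. The directional derivative of $F$ at $(x,z)$ in direction $(d_x,d_z)$ is $F'(x,z;d_x,d_z):=\lim_{\tau\to+0}\frac{F(x+\tau d_x,z+\tau d_z)-F(x,z)}{\tau}$ (possibly $+\infty$). A point $(x^*,z^* )$ is d-stationary for $F$ if $F$ is directionally differentiable there and $F'(x^*,z^*;d_x,d_z)\ge0$ for all $(d_x,d_z)\in\mathbb{R}^p\times\mathbb{R}^N$. *)

(* Defs.v *)
(* MathComp + MathComp-Analysis, scalars R : realType,
   vectors of R^p are row vectors 'rV[R]_p, the Euclidean structure is
   defined explicitly below (the library's default norm on matrices is the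
   max-norm, which we only use for the topology, equivalent in finite dim). *)
From HB Require Import structures.
From mathcomp Require Import all_boot all_order all_algebra.
From mathcomp Require Import all_classical all_reals all_analysis.
Set Implicit Arguments. Unset Strict Implicit. Unset Printing Implicit Defensive.
Import Order.TTheory GRing.Theory Num.Theory.
Import numFieldNormedType.Exports.
Local Open Scope classical_set_scope.
Local Open Scope ring_scope.

Section Defs.
Variable R : realType.

Definition dotv (n : nat) (u v : 'rV[R]_n) : R := \sum_(i < n) u ord0 i * v ord0 i.
Definition sqn (n : nat) (u : 'rV[R]_n) : R := dotv u u.
Definition enorm (n : nat) (u : 'rV[R]_n) : R := Num.sqrt (sqn u).

Definition enorm2 (p N : nat) (u : 'rV[R]_p) (v : 'rV[R]_N) : R :=
  Num.sqrt (sqn u + sqn v).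

Local Open Scope ereal_scope.

Definition proper_fun (n : nat) (phi : 'rV[R]_n -> \bar R) : Prop :=
  (forall u, phi u != -oo) /\ (exists u, phi u != +oo).

Definition prox_bounded_with (n : nat) (phi : 'rV[R]_n -> \bar R) (eta : R) : Prop :=
  exists c : R, forall u, c%:E <= phi u + (eta / 2 * sqn u)%:E.

Definition has_dir_deriv (n : nat) (phi : 'rV[R]_n -> \bar R) (u d : 'rV[R]_n)
    (l : \bar R) : Prop :=
  (fun tau : R => (phi (u + tau *: d)%R - phi u) * (tau^-1)%:E) @ 0^'+ --> l.

Definition dir_differentiable_at (n : nat) (phi : 'rV[R]_n -> \bar R) (u : 'rV[R]_n) :=
  forall d, exists l, l != -oo /\ has_dir_deriv phi u d l.

Definition dir_differentiable (n : nat) (phi : 'rV[R]_n -> \bar R) : Prop :=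
  forall u, phi u \is a fin_num -> dir_differentiable_at phi u.

Definition in_prox (n : nat) (phi : 'rV[R]_n -> \bar R) (eta : R) (y u : 'rV[R]_n) :=
  forall v, phi u * (eta^-1)%:E + (2^-1 * sqn (u - y)%R)%:E
            <= phi v * (eta^-1)%:E + (2^-1 * sqn (v - y)%R)%:E.

Definition has_dir_deriv2 (p N : nat) (Phi : 'rV[R]_p -> 'rV[R]_N -> \bar R)
    (x : 'rV[R]_p) (z : 'rV[R]_N) (dx : 'rV[R]_p) (dz : 'rV[R]_N) (l : \bar R) :=
  (fun tau : R => (Phi (x + tau *: dx)%R (z + tau *: dz)%R - Phi x z) * (tau^-1)%:E)
    @ 0^'+ --> l.

Definition d_stationary (p N : nat) (Phi : 'rV[R]_p -> 'rV[R]_N -> \bar R)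
    (x : 'rV[R]_p) (z : 'rV[R]_N) :=
  forall dx dz, exists l, has_dir_deriv2 Phi x z dx dz l /\ 0 <= l.

(* maximum of F(x_i,z_i) over i = max(0,t-r+1), ..., t *)
Definition nm_ref (p N : nat) (Phi : 'rV[R]_p -> 'rV[R]_N -> \bar R)
    (x : nat -> 'rV[R]_p) (z : nat -> 'rV[R]_N) (r t : nat) : \bar R :=
  \big[maxe/-oo]_((t.+1 - r)%N <= i < t.+1) Phi (x i) (z i).

Definition gpalm_test (p N : nat) (Phi : 'rV[R]_p -> 'rV[R]_N -> \bar R)
    (x : nat -> 'rV[R]_p) (z : nat -> 'rV[R]_N) (r t : nat)
    (sigma1 sigma2 etx etz : R) (xn : 'rV[R]_p) (zn : 'rV[R]_N) : Prop :=
  Phi xn zn <= nm_ref Phi x z r t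
               - (sigma1 / 2 * etx * sqn (xn - x t)%R)%:E
               - (sigma2 / 2 * etz * sqn (zn - z t)%R)%:E.

Local Close Scope ereal_scope.

Definition clip (lo hi a : R) : R := Num.min hi (Num.max lo a).

(* For iteration t,
   L t is the first accepted line-search index l, and (xtr t l, ztr t l)
   are the trial points computed for l = 0, ..., L t; the trial points for
   l < L t fail the test and the one for l = L t passes and becomes
   (x (t+1), z (t+1)).  ehx/ehz are the hat-eta's; the actual step
   parameters are eta_t^x = rho1^(L t) * ehx t, eta_t^z = rho2^(L t) * ehz t. *)
Definition GPALM_run (p N : nat)
    (gx : 'rV[R]_p -> 'rV[R]_N -> 'rV[R]_p) (gz : 'rV[R]_p -> 'rV[R]_N -> 'rV[R]_N)
    (g : 'rV[R]_p -> \bar R) (h : 'rV[R]_N -> \bar R)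
    (Phi : 'rV[R]_p -> 'rV[R]_N -> \bar R)
    (r : nat) (rho1 rho2 sigma1 sigma2 etalo etahi : R)
    (x : nat -> 'rV[R]_p) (z : nat -> 'rV[R]_N) (ehx ehz : nat -> R)
    (L : nat -> nat) (xtr : nat -> nat -> 'rV[R]_p) (ztr : nat -> nat -> 'rV[R]_N)
  : Prop :=
  (ehx 0%N = 1 /\ ehz 0%N = 1) /\
  [/\
   (forall t l, (l <= L t)%N ->
      in_prox g (rho1 ^+ l * ehx t)
        (x t - (rho1 ^+ l * ehx t)^-1 *: gx (x t) (z t)) (xtr t l)
      /\ in_prox h (rho2 ^+ l * ehz t)
        (z t - (rho2 ^+ l * ehz t)^-1 *: gz (xtr t l) (z t)) (ztr t l)),
   (forall t l, (l < L t)%N ->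
      ~ gpalm_test Phi x z r t sigma1 sigma2 (rho1 ^+ l * ehx t) (rho2 ^+ l * ehz t)
          (xtr t l) (ztr t l)),
   (forall t, gpalm_test Phi x z r t sigma1 sigma2
          (rho1 ^+ L t * ehx t) (rho2 ^+ L t * ehz t) (x t.+1) (z t.+1)),
   (forall t, x t.+1 = xtr t (L t) /\ z t.+1 = ztr t (L t)) &
   (forall t,
      ehx t.+1 = clip etalo etahi
        (dotv (x t.+1 - x t) (gx (x t.+1) (z t.+1) - gx (x t) (z t))
           / sqn (x t.+1 - x t))
      /\ ehz t.+1 = clip etalo etahi
        (dotv (z t.+1 - z t) (gz (x t.+1) (z t.+1) - gz (x t.+1) (z t))
           / sqn (z t.+1 - z t)))].

End Defs.

(* Main.v *)
Require Import Defs.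
From HB Require Import structures.
From mathcomp Require Import all_boot all_order all_algebra.
From mathcomp Require Import all_classical all_reals all_analysis.
From mathcomp Require Import ring lra zify.
Import Order.TTheory GRing.Theory Num.Theory.
Import numFieldNormedType.Exports.
Local Open Scope classical_set_scope.
Local Open Scope ring_scope.
Set Implicit Arguments. Unset Strict Implicit. Unset Printing Implicit Defensive.

Section Lin.
Variable R : realType.
Variable n : nat.
Implicit Types u v w : 'rV[R]_n.

Lemma dotvC u v : dotv u v = dotv v u.
Proof. by apply: eq_bigr => i _; rewrite mulrC. Qed.
Lemma dotvDl u v w : dotv (u + v) w = dotv u w + dotv v w.
Proof. by rewrite /dotv -big_split; apply: eq_bigr => i _; rewrite mxE mulrDl. Qed.
Lemma dotvDr u v w : dotv w (u + v) = dotv w u + dotv w v.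
Proof. by rewrite dotvC dotvDl !(dotvC w). Qed.
Lemma dotvZl a u v : dotv (a *: u) v = a * dotv u v.
Proof. by rewrite /dotv mulr_sumr; apply: eq_bigr => i _; rewrite mxE mulrA. Qed.
Lemma dotvZr a u v : dotv v (a *: u) = a * dotv v u.
Proof. by rewrite dotvC dotvZl dotvC. Qed.
Lemma dotvNl u v : dotv (- u) v = - dotv u v.
Proof. by rewrite -scaleN1r dotvZl mulN1r. Qed.
Lemma dotvNr u v : dotv v (- u) = - dotv v u.
Proof. by rewrite dotvC dotvNl dotvC. Qed.
Lemma dotvBl u v w : dotv (u - v) w = dotv u w - dotv v w.
Proof. by rewrite dotvDl dotvNl. Qed.
Lemma dotvBr u v w : dotv w (u - v) = dotv w u - dotv w v.
Proof. by rewrite dotvDr dotvNr. Qed.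
Lemma dotv0l u : dotv 0 u = 0.
Proof. by rewrite /dotv big1 // => i _; rewrite mxE mul0r. Qed.
Lemma dotv0r u : dotv u 0 = 0.
Proof. by rewrite dotvC dotv0l. Qed.
Lemma sqn_ge0 u : 0 <= sqn u.
Proof. by apply: sumr_ge0 => i _; rewrite -expr2 sqr_ge0. Qed.
Lemma sqnD u v : sqn (u + v) = sqn u + 2 * dotv u v + sqn v.
Proof. rewrite /sqn !dotvDl !dotvDr (dotvC v u); ring. Qed.
Lemma sqnB u v : sqn (u - v) = sqn u - 2 * dotv u v + sqn v.
Proof. rewrite /sqn !dotvBl !dotvBr (dotvC v u); ring. Qed.
Lemma sqnZ a u : sqn (a *: u) = a ^+ 2 * sqn u.
Proof. rewrite /sqn dotvZl dotvZr; ring. Qed.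
Lemma sqn0 : sqn (0 : 'rV[R]_n) = 0.
Proof. exact: dotv0l. Qed.
Lemma young u v a : 0 < a -> 2 * dotv u v <= a * sqn u + a^-1 * sqn v.
Proof.
move=> a0; have := sqn_ge0 (a *: u - v); rewrite sqnB sqnZ dotvZl => H.
have : 0 <= a^-1 * (a ^+ 2 * sqn u - 2 * (a * dotv u v) + sqn v).
  by rewrite mulr_ge0 // invr_ge0 ltW.
have ai : a^-1 * a = 1 by rewrite mulVf // gt_eqF.
suff -> : a^-1 * (a ^+ 2 * sqn u - 2 * (a * dotv u v) + sqn v) =
   a * sqn u + a^-1 * sqn v - 2 * dotv u v by rewrite subr_ge0.
by field; rewrite gt_eqF.
Qed.
Lemma entry_le u i : (u ord0 i) ^+ 2 <= sqn u.
Proof.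
rewrite /sqn /dotv (bigD1 i) //= -expr2 lerDl.
by apply: sumr_ge0 => j _; rewrite -expr2 sqr_ge0.
Qed.
End Lin.

Section Descent.
Variable R : realType.
Variables p N : nat.
Variable f : 'rV[R]_p * 'rV[R]_N -> R.

Lemma line_is_derive (w d : 'rV[R]_p * 'rV[R]_N) (x : R) :
  differentiable f (w + x *: d) ->
  is_derive x 1 (fun t : R => f (w + t *: d)) ('d f (w + x *: d) d).
Proof.
move=> df.
have E : (fun h : R => h^-1 *: (((fun t : R => f (w + t *: d)) \o shift x) (h *: 1) -
           f (w + x *: d))) =
         (fun h : R => h^-1 *: ((f \o shift (w + x *: d)) (h *: d) - f (w + x *: d))).
  apply: funext => h /=; congr (_ *: (f _ - _)).
  have -> : h%:A = h :> R by exact: (mulr1 h).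
  by rewrite scalerDl addrCA.
apply: DeriveDef.
  by rewrite /derivable E; exact: diff_derivable.
by rewrite /derive E -/(derive f _ d) deriveE.
Qed.
End Descent.

Section Descent2.
Variable R : realType.
Variables p N : nat.
Variable f : 'rV[R]_p * 'rV[R]_N -> R.
Variables (gx : 'rV[R]_p -> 'rV[R]_N -> 'rV[R]_p) (gz : 'rV[R]_p -> 'rV[R]_N -> 'rV[R]_N).
Variable M : R.
Hypothesis hdiff : forall u v, differentiable f (u, v).
Hypothesis hgrad : forall u v du dv,
      'd f (u, v) (du, dv) = dotv (gx u v) du + dotv (gz u v) dv.
Hypothesis M0 : 0 < M.
Hypothesis hlip : forall u1 v1 u2 v2,
      enorm2 (gx u1 v1 - gx u2 v2) (gz u1 v1 - gz u2 v2)
      <= M * enorm2 (u1 - u2) (v1 - v2).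

Lemma lip_sq u1 v1 u2 v2 :
  sqn (gx u1 v1 - gx u2 v2) + sqn (gz u1 v1 - gz u2 v2)
  <= M ^+ 2 * (sqn (u1 - u2) + sqn (v1 - v2)).
Proof.
have := hlip u1 v1 u2 v2; rewrite /enorm2 => H.
have a0 : 0 <= sqn (gx u1 v1 - gx u2 v2) + sqn (gz u1 v1 - gz u2 v2)
  by rewrite addr_ge0 // sqn_ge0.
have b0 : 0 <= sqn (u1 - u2) + sqn (v1 - v2) by rewrite addr_ge0 // sqn_ge0.
rewrite -(sqr_sqrtr a0) -(sqr_sqrtr b0) -exprMn.
by rewrite lerXn2r // ?nnegrE ?mulr_ge0 ?sqrtr_ge0 // ltW.
Qed.

Lemma descent u v du dv :
  f (u + du, v + dv) <= f (u, v) + dotv (gx u v) du + dotv (gz u v) dv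
                         + M * (sqn du + sqn dv).
Proof.
pose w : 'rV[R]_p * 'rV[R]_N := (u, v); pose d : 'rV[R]_p * 'rV[R]_N := (du, dv).
pose phi := fun t : R => f (w + t *: d).
have phit : forall t, w + t *: d = (u + t *: du, v + t *: dv) by [].
have ider : forall t : R, is_derive t (1:R) phi ('d f (w + t *: d) d).
  move=> t; apply: line_is_derive; rewrite phit; exact: hdiff.
have [c c01 Hc] : exists2 c, c \in `[0, 1]%R & phi 1 - phi 0 = 'd f (w + c *: d) d * (1 - 0).
  apply: MVT_segment => //.
  by apply: derivable_within_continuous => t _; exact: (@ex_derive _ _ _ _ _ _ _ (ider t)).
move: Hc; rewrite /phi phit phit !scale1r !scale0r !addr0 subr0 mulr1.
rewrite phit hgrad => Hc.
set uc := u + c *: du; set vc := v + c *: dv.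
have c0 : 0 <= c by move: c01; rewrite in_itv /= => /andP[].
have c1 : c <= 1 by move: c01; rewrite in_itv /= => /andP[].
have iM0 : 0 < M^-1 by rewrite invr_gt0.
have Ha := young (gx uc vc - gx u v) du iM0.
have Hb := young (gz uc vc - gz u v) dv iM0.
rewrite invrK in Ha Hb.
have Hl := lip_sq uc vc u v.
have E1 : uc - u = c *: du by rewrite /uc addrC addKr.
have E2 : vc - v = c *: dv by rewrite /vc addrC addKr.
rewrite E1 E2 !sqnZ in Hl.
set S := sqn du + sqn dv.
have S0 : 0 <= S by rewrite addr_ge0 // sqn_ge0.
have Hl2 : sqn (gx uc vc - gx u v) + sqn (gz uc vc - gz u v) <= M ^+ 2 * S.
  apply: (le_trans Hl); apply: ler_wpM2l; first by rewrite sqr_ge0.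
  rewrite -mulrDr -[X in _ <= X]mul1r; apply: ler_wpM2r => //.
  by rewrite expr_le1.
have Hl3 : M^-1 * (sqn (gx uc vc - gx u v) + sqn (gz uc vc - gz u v)) <= M * S.
  apply: (le_trans (ler_wpM2l _ Hl2)); first by rewrite invr_ge0 ltW.
  by rewrite mulrA expr2 mulrA mulVf ?gt_eqF // mul1r.
rewrite !dotvBl in Ha Hb.
move: Hl3; rewrite mulrDr => Hl3.
have : f (u + du, v + dv) - f (u, v) = dotv (gx uc vc) du + dotv (gz uc vc) dv.
  by move: Hc; rewrite -/uc -/vc.
move: Ha Hb Hl3; rewrite /S; lra.
Qed.
End Descent2.

Section Prox.
Variable R : realType.
Variable n : nat.
Implicit Types (phi : 'rV[R]_n -> \bar R) (u v y G : 'rV[R]_n).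

Lemma prox_fin phi eta y u : proper_fun phi -> 0 < eta -> in_prox phi eta y u ->
  phi u \is a fin_num.
Proof.
move=> [Hn [v Hv]] e0 H.
have := H v; have := Hn v; have := Hn u.
case: (phi u) => [a| |] //= _; case: (phi v) Hv => [b| |] //= _ _.
rewrite gt0_mulye ?lte_fin ?invr_gt0 //.
Qed.

Lemma prox_ineq phi eta (x0 : 'rV[R]_n) G u v a b : 0 < eta ->
  in_prox phi eta (x0 - eta^-1 *: G) u -> phi u = a%:E -> phi v = b%:E ->
  a + dotv G (u - x0) + eta / 2 * sqn (u - x0)
  <= b + dotv G (v - x0) + eta / 2 * sqn (v - x0).
Proof.
move=> e0 H Hu Hv; have := H v; rewrite Hu Hv -!EFinM -!EFinD lee_fin.
have E w : w - (x0 - eta^-1 *: G) = (w - x0) + eta^-1 *: G.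
  by rewrite opprD opprK addrA.
rewrite !E !sqnD !sqnZ !dotvZr !(dotvC _ G) => Hle.
have := ler_pM2l e0; move=> /(_ _ _) Heq; move: Hle; rewrite -Heq => Hle.
set su := sqn (u - x0) in Hle *; set sv := sqn (v - x0) in Hle *.
set du := dotv G (u - x0) in Hle *; set dv := dotv G (v - x0) in Hle *.
set sG := sqn G in Hle *.
have F1 : forall a su du, eta * (a * eta^-1 + 2^-1 * (su + 2 * (eta^-1 * du) + eta^-1 ^+ 2 * sG))
   = a + du + eta / 2 * su + eta^-1 / 2 * sG.
  by move=> a' su' du'; field; rewrite gt_eqF.
rewrite !F1 in Hle; lra.
Qed.
End Prox.

Section GLL.
Variable R : realType.
Variables (Fr W D : nat -> R) (r T0 : nat) (c M c0 : R).
Hypothesis r0 : (0 < r)%N.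
Hypothesis cpos : 0 < c.
Hypothesis M0 : 0 <= M.
Hypothesis H1 : forall t, (T0 <= t)%N -> forall i, (t.+1 - r <= i <= t)%N -> Fr i <= W t.
Hypothesis H2 : forall t, (T0 <= t)%N -> exists i, (t.+1 - r <= i <= t)%N /\ Fr i = W t.
Hypothesis H3 : forall t, (T0 <= t)%N -> Fr t.+1 <= W t - c * D t.
Hypothesis H4 : forall t, (T0 <= t)%N -> Fr t.+1 <= Fr t + M * D t.
Hypothesis D0 : forall t, 0 <= D t.
Hypothesis Flb : forall t, (T0 <= t)%N -> c0 <= Fr t.

Lemma Wmono t : (T0 <= t)%N -> W t.+1 <= W t.
Proof.
move=> Ht; have [i [Hi <-]] := H2 (leqW Ht).
have [->|Hne] := eqVneq i t.+1.
  by apply: (le_trans (H3 Ht)); rewrite lerBlDr lerDl mulr_ge0 // ltW.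
by apply: H1 => //; apply/andP; split; lia.
Qed.

Lemma Wmono_le t s : (T0 <= t)%N -> (t <= s)%N -> W s <= W t.
Proof.
move=> Ht; elim: s => [|s IH]; first by rewrite leqn0 => /eqP ->.
rewrite leq_eqVlt => /orP[/eqP <-//|]; rewrite ltnS => Hts.
by apply: le_trans (IH Hts); apply: Wmono; lia.
Qed.

Lemma Wlb t : (T0 <= t)%N -> c0 <= W t.
Proof. by move=> Ht; apply: le_trans (Flb Ht) _; apply: H1 => //; apply/andP; split; lia. Qed.

Let S := [set x | exists2 t, (T0 <= t)%N & W t = x].
Let Ws := inf S.

Lemma hasinfS : has_inf S.
Proof.
split; first by exists (W T0); exists T0.
by exists c0 => x [t Ht <-]; exact: Wlb.
Qed.

Lemma Winf1 t : (T0 <= t)%N -> Ws <= W t.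
Proof. move=> Ht; apply: ge_inf; [exact: hasinfS.2| by exists t]. Qed.

Lemma Winf2 e : 0 < e -> exists N, forall t, (N <= t)%N -> W t < Ws + e.
Proof.
move=> e0; have [x [t Ht <-] Hx] := inf_adherent e0 hasinfS.
exists t => s Hs; apply: le_lt_trans Hx; exact: Wmono_le.
Qed.

Definition claimS (J : nat) := forall e, 0 < e -> exists N, forall T i, (N <= T)%N ->
  (T.+1 - r <= i <= T)%N -> Fr i = W T -> forall j, (j <= J)%N ->
  `|Fr (i - j)%N - Ws| < e /\ ((j < J)%N -> D (i - j.+1)%N < e).

Lemma claim0 : claimS 0.
Proof.
move=> e e0; have [N HN] := Winf2 e0; exists (N + T0)%N => T i HT Hi HiT j.
rewrite leqn0 => /eqP ->; split => //; rewrite subn0 HiT.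
have := HN T (leq_trans (leq_addr _ _) HT); have := Winf1 (leq_trans (leq_addl _ _) HT).
move=> h1 h2; rewrite ger0_norm ?subr_ge0 //; lra.
Qed.

Lemma claimSS J : claimS J -> claimS J.+1.
Proof.
move=> IH e e0.
pose K := 1 + 2 * M / c + 2 / c.
have Mc : 0 <= 2 * M / c by rewrite divr_ge0 ?mulr_ge0 // ltW.
have c2 : 0 < 2 / c by rewrite divr_gt0.
have K1 : 1 <= K by rewrite /K; lra.
have K0 : 0 < K by lra.
pose e' := e / K.
have e'0 : 0 < e' by rewrite divr_gt0.
have Ke : e' * K = e by rewrite /e' mulrVK // unitfE gt_eqF.
have e'e : e' <= e by rewrite -Ke ler_peMr // ltW.
have F1 : e' * (1 + 2 * M / c) <= e.
  by rewrite -Ke; apply: ler_wpM2l; [exact: ltW | rewrite /K; lra].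
have F2 : 2 * e' / c <= e.
  rewrite -Ke /K mulrDr.
  have : 0 <= e' * (1 + 2 * M / c) by apply: mulr_ge0; [exact: ltW | lra].
  have -> : 2 * e' / c = e' * (2 / c) by rewrite -mulrA mulrCA.
  lra.
have [N1 HN1] := IH e' e'0.
have [N2 HN2] := @Winf2 e' e'0.
exists (N1 + N2 + T0 + r + J + 1)%N.
move=> T i HT Hi HiT j Hj.
have [HT1 [Hs0 [Hs2 [Hss Hsw]]]] : (N1 <= T)%N /\ (T0 <= i - J.+1)%N /\ (N2 <= i - J.+1)%N
   /\ (i - J.+1).+1 = (i - J)%N /\ ((i - J.+1).+1 - r <= i - J.+1 <= i - J.+1)%N.
  by move: HT Hi r0; clear; lia.
have [Hjl | Hjg] := ltnP j J.
  have [A B] := HN1 T i HT1 Hi HiT j (ltnW Hjl); split; first by apply: lt_le_trans A e'e.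
  by move=> _; apply: lt_le_trans (B Hjl) e'e.
have [A _] := HN1 T i HT1 Hi HiT J (leqnn J).
set s := (i - J.+1)%N in Hs0 Hs2 Hss Hsw *.
have W1 := HN2 s Hs2.
have W2 := Winf1 Hs0.
have h3 := H3 Hs0; have h4 := H4 Hs0; rewrite Hss in h3 h4.
have h1 : Fr s <= W s by apply: H1 => //.
move: A; rewrite ltr_norml => /andP[A1 A2].
have cD : c * D s < 2 * e' by lra.
have Ds : D s < 2 * e' / c.
  rewrite -(ltr_pM2r cpos) mulrVK ?unitfE ?gt_eqF // mulrC //.
have MDs : M * D s <= M * (2 * e' / c) by apply: ler_wpM2l => //; exact: ltW.
have E2 : M * (2 * e' / c) = e' * (2 * M / c) by ring.
have [Hj'|Hj'] := eqVneq j J.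
  subst j; split; first by rewrite ltr_norml; apply/andP; split; lra.
  by move=> _; lra.
have -> : j = J.+1 by move: Hj Hjg Hj'; clear; move=> H H' /eqP H''; lia.
split; last by rewrite ltnn.
have -> : (i - J.+1)%N = s by [].
rewrite ltr_norml; apply/andP; split; last by lra.
have : e' * (1 + 2 * M / c) = e' + e' * (2 * M / c) by rewrite mulrDr mulr1.
lra.
Qed.

Lemma GLL_main e : 0 < e -> exists N, forall t, (N <= t)%N -> D t < e.
Proof.
move=> e0.
have HS : forall J, claimS J by elim=> [|J IH]; [exact: claim0 | exact: claimSS].
have [N HN] := HS r e e0.
exists (N + T0)%N => t Ht.
have HT0 : (T0 <= t + r)%N by lia.
have [i [Hi HiT]] := H2 HT0.
have HN' : (N <= t + r)%N by lia.
have [_ B] := HN (t + r)%N i HN' Hi HiT (i - t.+1)%N (ltac:(lia)).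
have -> : t = (i - (i - t.+1).+1)%N by lia.
apply: B; lia.
Qed.
End GLL.

Section Cvg.
Variable R : realType.

Lemma cvg_big_sum (I : finType) (F : I -> nat -> R) (l : I -> R) :
  (forall i, F i @ \oo --> l i) ->
  (fun k => \sum_i F i k) @ \oo --> \sum_i l i.
Proof.
move=> H.
have -> : (fun k => \sum_i F i k) = \sum_i F i.
  by apply: funext => k; rewrite fct_sumE.
elim/big_rec2 : _ => [|i y1 y2 _ IH]; first exact: cvg_cst.
exact: cvgD.
Qed.

Variable n : nat.

Lemma cvg_entry (a : nat -> 'rV[R]_n) (A : 'rV[R]_n) i : a @ \oo --> A ->
  (fun k => a k ord0 i) @ \oo --> A ord0 i.
Proof. by move=> H; apply: (continuous_cvg _ (@coord_continuous R 1 n ord0 i A)). Qed.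

Lemma cvg_dotv (a b : nat -> 'rV[R]_n) (A B : 'rV[R]_n) : a @ \oo --> A -> b @ \oo --> B ->
  (fun k => dotv (a k) (b k)) @ \oo --> dotv A B.
Proof.
move=> Ha Hb; apply: cvg_big_sum => i /=.
by apply: cvgM; apply: cvg_entry.
Qed.
End Cvg.

Section Cvg2.
Variable R : realType.
Variable n : nat.

Lemma sqnN (w : 'rV[R]_n) : sqn (- w) = sqn w.
Proof. by rewrite /sqn dotvNl dotvNr opprK. Qed.

Lemma sqn_cvg0 (u : nat -> 'rV[R]_n) (a : 'rV[R]_n) : u @ \oo --> a ->
  (fun k => sqn (u k - a)) @ \oo --> 0.
Proof.
move=> H.
have H' : (fun k => u k - a) @ \oo --> (0 : 'rV[R]_n).
  rewrite -(subrr a); exact: (cvgB H (cvg_cst a)).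
have := cvg_dotv H' H'; rewrite dotv0l; exact.
Qed.

Lemma cvg_of_sqn (u : nat -> 'rV[R]_n) (a : 'rV[R]_n) :
  (fun k => sqn (u k - a)) @ \oo --> 0 -> u @ \oo --> a.
Proof.
move=> H; apply/cvgrPdist_lt => e e0.
have e20 : 0 < e ^+ 2 by rewrite exprn_gt0.
have Hev : \forall k \near \oo, sqn (u k - a) < e ^+ 2 by exact: (cvgr_lt _ H _ e20).
apply: filterS Hev => k Hk.
have -> : `|a - u k| = mx_norm (a - u k) by [].
rewrite mx_normrE; apply: bigmax_lt => // -[i j] _ /=.
rewrite [i]ord1.
have := entry_le (a - u k) j; rewrite -sqnN opprB => Hj.

rewrite -(@ltr_pXn2r _ 2) // ?nnegrE //=.
- rewrite -normrX ger0_norm ?sqr_ge0 //; exact: le_lt_trans Hj Hk.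
- by rewrite ltW.
Qed.
End Cvg2.

Section ProxLim.
Variable R : realType.
Variable n : nat.

Lemma prox_limit (phi : 'rV[R]_n -> \bar R) (E : R) (u w Gs : nat -> 'rV[R]_n)
  (eta : nat -> R) (us G : 'rV[R]_n) :
  proper_fun phi -> lower_semicontinuous phi ->
  (forall k, 0 < eta k) -> (forall k, eta k <= E) ->
  (forall k, in_prox phi (eta k) (w k - (eta k)^-1 *: Gs k) (u k)) ->
  u @ \oo --> us -> w @ \oo --> us -> Gs @ \oo --> G ->
  forall v, (phi us <= phi v + (dotv G (v - us) + E / 2 * sqn (v - us))%:E)%E.
Proof.
move=> Hp Hlsc e0 eE Hprox Hu Hw HG v.
case Ev: (phi v) => [b| |]; last by have := Hp.1 v; rewrite Ev.
  2: by rewrite addye // leey.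
rewrite -EFinD.
pose a k := fine (phi (u k)).
have Ha k : phi (u k) = (a k)%:E.
  by rewrite /a fineK //; apply: prox_fin Hp (e0 k) (Hprox k).
pose Rk k := b + dotv (Gs k) (v - u k) + E / 2 * sqn (v - w k).
have HR k : a k <= Rk k.
  have := prox_ineq (e0 k) (Hprox k) (Ha k) Ev.
  rewrite /Rk !dotvBr.
  have s1 := sqn_ge0 (u k - w k); have s2 := sqn_ge0 (v - w k).
  have h1 : 0 <= eta k / 2 * sqn (u k - w k) by rewrite mulr_ge0 // divr_ge0 // ltW.
  have h2 : eta k / 2 * sqn (v - w k) <= E / 2 * sqn (v - w k).
    by apply: ler_wpM2r => //; have := eE k; lra.
  lra.
rewrite [b + _]addrA.
set A := b + dotv G (v - us) + E / 2 * sqn (v - us).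
have HRA : Rk @ \oo --> A.
  apply: cvgD; first apply: cvgD; first exact: cvg_cst.
    by apply: cvg_dotv => //; apply: cvgB => //; exact: cvg_cst.
  apply: cvgM; first exact: cvg_cst.
  by apply: cvg_dotv; apply: cvgB => //; exact: cvg_cst.
rewrite leNgt; apply/negP => Hlt.
have [a0 [Aa0 a0phi]] : exists a0, A < a0 /\ (a0%:E < phi us)%E.
  move: Hlt; case: (phi us) => [y| |] //.
    rewrite lte_fin => Ay; exists ((A + y) / 2); split; rewrite ?lte_fin; lra.
  by move=> _; exists (A + 1); split; [lra | exact: ltry].
have [V HV HVphi] := Hlsc us a0 a0phi.
have ev1 : \forall k \near \oo, V (u k) := Hu _ HV.
have ev2 : \forall k \near \oo, Rk k < a0 by exact: (cvgr_lt _ HRA _ Aa0).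
have [k [h1 h2]] := filter_ex (filterI ev1 ev2).
have := HVphi _ h1; rewrite Ha lte_fin => h3.
have := HR k; lra.
Qed.

Lemma dir_lower (phi : 'rV[R]_n -> \bar R) (us G d : 'rV[R]_n) (E : R) :
  proper_fun phi -> dir_differentiable phi -> phi us \is a fin_num ->
  (forall v, (phi us <= phi v + (dotv G (v - us) + E / 2 * sqn (v - us))%:E)%E) ->
  exists l : \bar R, (l != -oo)%E /\ has_dir_deriv phi us d l /\ ((- dotv G d)%:E <= l)%E.
Proof.
move=> Hp Hdd Hfin Hv.
have [l [ln Hl]] := Hdd us Hfin d.
exists l; split => //; split => //.
pose lo := fun t : R => (- dotv G d - E / 2 * t * sqn d)%:E.
have Hlo : lo t @[t --> 0^'+] --> (- dotv G d)%:E.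
  apply: cvg_EFin; first by near=> t.
  apply: cvg_at_right_filter.
  have -> : - dotv G d = (- dotv G d - E / 2 * 0 * sqn d) by rewrite mulr0 mul0r subr0.
  apply: cvgB; first exact: cvg_cst.
  apply: cvgM; last exact: cvg_cst.
  by apply: cvgM; [exact: cvg_cst | exact: cvg_id].
rewrite -(cvg_lim (@ereal_hausdorff R) Hlo) -(cvg_lim (@ereal_hausdorff R) Hl).
apply: lee_lim; [by apply/cvg_ex; eexists; exact: Hlo | by apply/cvg_ex; eexists; exact: Hl|].
near=> t.
have t0 : 0 < t by near: t; exact: nbhs_right_gt.
have := Hv (us + t *: d).
have -> : us + t *: d - us = t *: d by rewrite addrC addKr.
rewrite dotvZr sqnZ.
move: Hfin; rewrite fin_numE => /andP[].
case: (phi us) => [a| |] //= _ _.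
have := Hp.1 (us + t *: d).
case: (phi (us + t *: d)) => [b| |] //= _.
  rewrite -EFinD lee_fin => Hab.
  rewrite /lo -EFinB -EFinM lee_fin ler_pdivlMr //.
  have -> : (- dotv G d - E / 2 * t * sqn d) * t = - (t * dotv G d + E / 2 * (t ^+ 2 * sqn d)) by ring.
  lra.
move=> _; rewrite /lo.
by rewrite addye // gt0_mulye ?leey // lte_fin invr_gt0.
Unshelve. all: by end_near.
Qed.
End ProxLim.

Section Misc.
Variable R : realType.

Lemma bigmaxe_ge (e : nat -> \bar R) a b i : (a <= i < b)%N ->
  (e i <= \big[maxe/-oo]_(a <= j < b) e j)%E.
Proof.
elim: b => [|b IH]; first by rewrite ltn0 andbF.
move=> /andP[ai]; rewrite ltnS leq_eqVlt => /orP[/eqP Hib|ib].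
  subst i; by rewrite big_nat_recr //= le_max lexx orbT.
rewrite big_nat_recr /=; last by lia.
by rewrite le_max IH // ai.
Qed.

Lemma bigmaxe_ex (e : nat -> \bar R) a b : (a < b)%N ->
  exists i, (a <= i < b)%N /\ (\big[maxe/-oo]_(a <= j < b) e j = e i)%E.
Proof.
elim: b => [|b IH]; first by rewrite ltn0.
rewrite ltnS leq_eqVlt => /orP[/eqP ->|ab].
  exists b; split; first by rewrite leqnn ltnSn.
  by rewrite big_nat_recr //= big_geq // maxEle leNye.
have [i [Hi Hb]] := IH ab.
rewrite big_nat_recr /=; last by lia.
rewrite Hb maxEle; case: ifP => _.
  by exists b; split => //; apply/andP; split; lia.
by exists i; split => //; move: Hi => /andP[? ?]; apply/andP; split; lia.
Qed.

Lemma clip_bd (lo hi a : R) : lo <= hi -> lo <= clip lo hi a <= hi.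
Proof.
move=> lh; rewrite /clip le_min ge_min le_max lexx lh /=.
by rewrite lexx.
Qed.

Lemma pow_unbounded (rho K : R) : 1 < rho -> exists l, K <= rho ^+ l.
Proof.
move=> r1.
have B l : 1 + l%:R * (rho - 1) <= rho ^+ l.
  elim: l => [|l IH]; first by rewrite mul0r addr0 expr0.
  have g1 : 1 <= rho ^+ l by rewrite exprn_ege1 // ltW.
  rewrite exprS -natr1 mulrDl mul1r.
  have : rho * (1 + l%:R * (rho - 1)) <= rho * rho ^+ l.
    by apply: ler_wpM2l => //; lra.
  have : 0 <= l%:R * (rho - 1) by rewrite mulr_ge0 // subr_ge0 ltW.
  nra.
have K0 : 0 <= `|K| / (rho - 1) by rewrite divr_ge0 // subr_ge0 ltW.
exists (Num.Def.archi_bound (`|K| / (rho - 1))).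
have := archi_boundP K0; set N := (Num.Def.archi_bound _)%:R => HN.
apply: le_trans (B _); rewrite -/N.
have : `|K| / (rho - 1) * (rho - 1) <= N * (rho - 1) by apply: ler_wpM2r; [rewrite subr_ge0 ltW | exact: ltW].
rewrite mulfVK ?subr_eq0 ?gt_eqF //.
have := ler_norm K; lra.
Qed.
End Misc.

Section Misc2.
Variable R : realType.

Lemma dnbhs_right (f : R -> R) (l : R) : f x @[x --> 0^'] --> l -> f x @[x --> 0^'+] --> l.
Proof.
move=> H A /H /nbhs_ballP [_ /posnumP[e] xe_A].
by exists e%:num => //= y xe_y; rewrite lt_def => /andP [xney _]; apply: xe_A.
Qed.

Variables p N : nat.
Lemma cvg_pair_fst (u : nat -> 'rV[R]_p) (v : nat -> 'rV[R]_N) (a : 'rV[R]_p) (b : 'rV[R]_N) :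
  (fun k => (u k, v k)) @ \oo --> (a, b) -> u @ \oo --> a.
Proof.
move=> H P HP; apply: (H (fun w => P w.1)).
exact: (@filter_prod1 _ _ (nbhs a) (nbhs b) _ P HP).
Qed.
Lemma cvg_pair_snd (u : nat -> 'rV[R]_p) (v : nat -> 'rV[R]_N) (a : 'rV[R]_p) (b : 'rV[R]_N) :
  (fun k => (u k, v k)) @ \oo --> (a, b) -> v @ \oo --> b.
Proof.
move=> H P HP; apply: (H (fun w => P w.2)).
exact: (@filter_prod2 _ _ (nbhs a) (nbhs b) _ P HP).
Qed.

Lemma deriv_cvg (f : 'rV[R]_p * 'rV[R]_N -> R) (w d : 'rV[R]_p * 'rV[R]_N) :
  differentiable f w ->
  (fun h : R => h^-1 *: ((f \o shift w) (h *: d) - f w)) @ 0^'+ --> 'd f w d.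
Proof.
move=> df; apply: dnbhs_right.
have H := @diff_derivable _ _ _ f w d df.
rewrite -(deriveE d df); exact: H.
Qed.
End Misc2.

Section Final.
Variable R : realType.
Variables p N : nat.
Variable f : 'rV[R]_p * 'rV[R]_N -> R.
Variables (gx : 'rV[R]_p -> 'rV[R]_N -> 'rV[R]_p) (gz : 'rV[R]_p -> 'rV[R]_N -> 'rV[R]_N).
Variables (g : 'rV[R]_p -> \bar R) (h : 'rV[R]_N -> \bar R) (M E : R).
Hypothesis hdiff : forall u v, differentiable f (u, v).
Hypothesis hgrad : forall u v du dv,
      'd f (u, v) (du, dv) = dotv (gx u v) du + dotv (gz u v) dv.
Hypothesis M0 : 0 < M.
Hypothesis hlip : forall u1 v1 u2 v2,
      enorm2 (gx u1 v1 - gx u2 v2) (gz u1 v1 - gz u2 v2)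
      <= M * enorm2 (u1 - u2) (v1 - v2).
Hypotheses (Pg : proper_fun g) (Ph : proper_fun h).
Hypotheses (lscg : lower_semicontinuous g) (lsch : lower_semicontinuous h).
Hypotheses (ddg : dir_differentiable g) (ddh : dir_differentiable h).
Variables (ux wx : nat -> 'rV[R]_p) (uz wz : nat -> 'rV[R]_N) (etax etaz : nat -> R).
Variables (xs : 'rV[R]_p) (zs : 'rV[R]_N).
Hypotheses (etaxp : forall k, 0 < etax k) (etazp : forall k, 0 < etaz k).
Hypotheses (etaxE : forall k, etax k <= E) (etazE : forall k, etaz k <= E).
Hypothesis Hprx : forall k, in_prox g (etax k) (wx k - (etax k)^-1 *: gx (wx k) (wz k)) (ux k).
Hypothesis Hprz : forall k, in_prox h (etaz k) (wz k - (etaz k)^-1 *: gz (ux k) (wz k)) (uz k).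
Hypotheses (Hux : ux @ \oo --> xs) (Huz : uz @ \oo --> zs).
Hypotheses (dX : (fun k => ux k - wx k) @ \oo --> (0 : 'rV[R]_p))
           (dZ : (fun k => uz k - wz k) @ \oo --> (0 : 'rV[R]_N)).

Lemma final_wx : wx @ \oo --> xs.
Proof.
have -> : wx = (fun k => ux k - (ux k - wx k)) by apply: funext => k; rewrite opprB addrC subrK.
by rewrite -[xs]subr0; apply: cvgB.
Qed.
Lemma final_wz : wz @ \oo --> zs.
Proof.
have -> : wz = (fun k => uz k - (uz k - wz k)) by apply: funext => k; rewrite opprB addrC subrK.
by rewrite -[zs]subr0; apply: cvgB.
Qed.

Lemma grad_cvg (a : nat -> 'rV[R]_p) (b : nat -> 'rV[R]_N) :
  a @ \oo --> xs -> b @ \oo --> zs ->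
  (fun k => gx (a k) (b k)) @ \oo --> gx xs zs /\ (fun k => gz (a k) (b k)) @ \oo --> gz xs zs.
Proof.
move=> Ha Hb.
have Hup : (fun k => M ^+ 2 * (sqn (a k - xs) + sqn (b k - zs))) @ \oo --> (0:R).
  have H0 : (fun k => M ^+ 2 * (sqn (a k - xs) + sqn (b k - zs))) @ \oo --> M ^+ 2 * (0 + 0).
    by apply: cvgM; [exact: cvg_cst | apply: cvgD; exact: sqn_cvg0].
  by rewrite addr0 mulr0 in H0.
have Hb1 := lip_sq M0 hlip.
split; apply: cvg_of_sqn; apply: (squeeze_cvgr _ (cvg_cst 0) Hup); near=> k;
  (apply/andP; split; first exact: sqn_ge0);
  have := Hb1 (a k) (b k) xs zs; have := sqn_ge0 (gx (a k) (b k) - gx xs zs);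
  have := sqn_ge0 (gz (a k) (b k) - gz xs zs); lra.
Unshelve. all: by end_near.
Qed.

Let F : 'rV[R]_p -> 'rV[R]_N -> \bar R := fun u v => ((f (u, v))%:E + g u + h v)%E.

Lemma final_part : d_stationary F xs zs.
Proof.
have Hwx := final_wx; have Hwz := final_wz.
have [HGx _] := grad_cvg Hwx Hwz.
have [_ HGz] := grad_cvg Hux Hwz.
have Gineq := prox_limit Pg lscg etaxp etaxE Hprx Hux Hwx HGx.
have Hineq := prox_limit Ph lsch etazp etazE Hprz Huz Hwz HGz.
have finphi : forall (n : nat) (phi : 'rV[R]_n -> \bar R) us (G : 'rV[R]_n),
    proper_fun phi ->
    (forall v, (phi us <= phi v + (dotv G (v - us) + E / 2 * sqn (v - us))%:E)%E) ->
    phi us \is a fin_num.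
  move=> n phi us G [Hn [v0 Hv0]] Hi.
  have := Hi v0; have := Hn v0; have := Hn us.
  by case: (phi us) => [a| |] //= _; case: (phi v0) Hv0 => [b| |] //.
have gxs := finphi _ _ _ _ Pg Gineq.
have hzs := finphi _ _ _ _ Ph Hineq.
move=> dx dz.
have [lg [lgn [Hlg lgb]]] := dir_lower dx Pg ddg gxs Gineq.
have [lh [lhn [Hlh lhb]]] := dir_lower dz Ph ddh hzs Hineq.
pose lf := 'd f (xs, zs) (dx, dz).
have Hf := @deriv_cvg R p N f (xs, zs) (dx, dz) (hdiff xs zs).
have Hf' : (fun t : R => ((t^-1 *: ((f \o shift (xs, zs)) (t *: (dx, dz)) - f (xs, zs)))%:E)) @ 0^'+ --> lf%:E.
  by apply: cvg_EFin; [near=> t | exact: Hf].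
exists (lf%:E + lg + lh)%E; split.
  rewrite /has_dir_deriv2.
  have d1 : (lf%:E +? lg)%E by apply: fin_num_adde_defr.
  have d2 : ((lf%:E + lg) +? lh)%E.
    apply: ltninfty_adde_def; rewrite inE /= ltNye //.
    by move: lgn; case: lg {Hlg lgb d1} => [l| |].
  apply: cvg_trans (near_eq_cvg _) (cvgeD d2 (cvgeD d1 Hf' Hlg) Hlh).
  near=> t.
  have t0 : 0 < t by near: t; exact: nbhs_right_gt.
  rewrite /F /=.
  have pe : t *: (dx, dz) + (xs, zs) = (xs + t *: dx, zs + t *: dz) by rewrite addrC.
  rewrite pe.
  rewrite -(fineK gxs) -(fineK hzs).
  move: (fine (g xs)) (fine (h zs)) => a b.
  have := Ph.1 (zs + t *: dz); have := Pg.1 (xs + t *: dx).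
  case: (g (xs + t *: dx)) => [c| |] //= _; case: (h (zs + t *: dz)) => [d| |] //= _.
  - rewrite -?EFinD -?EFinM -?EFinD -?EFinM -?EFinD; congr (_%:E).
    rewrite /GRing.scale /=; ring.
  - by rewrite gt0_mulye ?lte_fin ?invr_gt0 // addey.
  - by rewrite gt0_mulye ?lte_fin ?invr_gt0 // addey // addye.
  - by rewrite gt0_mulye ?lte_fin ?invr_gt0 // addey // addye.
apply: (le_trans _ (leeD (leeD (lexx lf%:E) lgb) lhb)).
rewrite -!EFinD lee_fin /lf hgrad; lra.
Unshelve. all: by end_near.
Qed.
End Final.

Unset Implicit Arguments. Set Strict Implicit.

Theorem theorem3 (R : realType) (p N : nat)
  (f : 'rV[R]_p * 'rV[R]_N -> R)
  (gx : 'rV[R]_p -> 'rV[R]_N -> 'rV[R]_p) (gz : 'rV[R]_p -> 'rV[R]_N -> 'rV[R]_N)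
  (g : 'rV[R]_p -> \bar R) (h : 'rV[R]_N -> \bar R) (M : R)
  (r : nat) (rho1 rho2 sigma1 sigma2 etalo etahi : R)
  (x : nat -> 'rV[R]_p) (z : nat -> 'rV[R]_N) (ehx ehz : nat -> R)
  (L : nat -> nat) (xtr : nat -> nat -> 'rV[R]_p) (ztr : nat -> nat -> 'rV[R]_N)
  (xs : 'rV[R]_p) (zs : 'rV[R]_N) :
  let F : 'rV[R]_p -> 'rV[R]_N -> \bar R :=
    fun u v => ((f (u, v))%:E + g u + h v)%E in
  (* (i) f differentiable, gradient (gx, gz), M-Lipschitz jointly *)
  (forall u v, differentiable f (u, v)) ->
  (forall u v du dv,
      'd f (u, v) (du, dv) = dotv (gx u v) du + dotv (gz u v) dv) ->
  0 < M ->
  (forall u1 v1 u2 v2,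
      enorm2 (gx u1 v1 - gx u2 v2) (gz u1 v1 - gz u2 v2)
      <= M * enorm2 (u1 - u2) (v1 - v2)) ->
  proper_fun g -> proper_fun h ->
  lower_semicontinuous g -> lower_semicontinuous h ->
  dir_differentiable g -> dir_differentiable h ->
  (* (ii) F bounded below *)
  (exists c : R, forall u v, (c%:E <= F u v)%E) ->
  (* (iii) prox-boundedness *)
  (exists eta : R, 0 < eta /\ prox_bounded_with g eta /\ prox_bounded_with h eta) ->
  (* algorithm parameters *)
  (1 <= r)%N -> 1 < rho1 -> 1 < rho2 ->
  0 < sigma1 < 1 -> 0 < sigma2 < 1 ->
  0 < etalo -> etalo <= etahi ->
  (* the sequence is generated by GPALM *)
  GPALM_run gx gz g h F r rho1 rho2 sigma1 sigma2 etalo etahi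
    x z ehx ehz L xtr ztr ->
  (* the sequence is bounded *)
  (exists B : R, forall t, enorm2 (x t) (z t) <= B) ->
  (* F is continuous on a compact set containing the sequence *)
  (exists K : set ('rV[R]_p * 'rV[R]_N),
      compact K /\ (forall t, K (x t, z t)) /\
      {within K, continuous (fun w : 'rV[R]_p * 'rV[R]_N => F w.1 w.2)}) ->
  (* (xs, zs) is an accumulation point *)
  (exists phi : nat -> nat, (forall k, (phi k < phi k.+1)%N) /\
      (fun k => (x (phi k), z (phi k))) @ \oo --> (xs, zs)) ->
  d_stationary F xs zs.
Proof.
move=> F hdiff hgrad M0 hlip Pg Ph lscg lsch ddg ddh [c0 Hc0] _ r1 rho1g rho2g
  /andP[s1a s1b] /andP[s2a s2b] elo ehi Hrun _ _ [phi [phimono Hcvg]].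
case: Hrun => [[ehx0 ehz0] [Hprox Hfail Htest Hnext Hclip]].
pose m := Num.min 1 etalo; pose Hh := Num.max 1 etahi.
have m0 : 0 < m by rewrite lt_min ltr01 elo.
have m1 : m <= 1 by rewrite ge_min lexx.
have mlo : m <= etalo by rewrite ge_min lexx orbT.
have Hh1 : 1 <= Hh by rewrite le_max lexx.
have hiH : etahi <= Hh by rewrite le_max lexx orbT.
have clipb : forall a, m <= clip etalo etahi a <= Hh.
  move=> a; have /andP[h1 h2] := clip_bd a ehi.
  by apply/andP; split; [exact: le_trans mlo h1 | exact: le_trans h2 hiH].
have ehxb : forall t, m <= ehx t <= Hh.
  case=> [|t]; first by rewrite ehx0 m1 Hh1.
  by have [-> _] := Hclip t; exact: clipb.
have ehzb : forall t, m <= ehz t <= Hh.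
  case=> [|t]; first by rewrite ehz0 m1 Hh1.
  by have [_ ->] := Hclip t; exact: clipb.
have rho10 : 0 < rho1 by lra.
have rho20 : 0 < rho2 by lra.
have etxp : forall t l, 0 < rho1 ^+ l * ehx t.
  move=> t l; apply: mulr_gt0; first exact: exprn_gt0.
  by have /andP[hh _] := ehxb t; exact: lt_le_trans m0 hh.
have etzp : forall t l, 0 < rho2 ^+ l * ehz t.
  move=> t l; apply: mulr_gt0; first exact: exprn_gt0.
  by have /andP[hh _] := ehzb t; exact: lt_le_trans m0 hh.
have gfin : forall t, g (x t.+1) \is a fin_num.
  move=> t; have [-> _] := Hnext t.
  exact: prox_fin Pg (etxp t (L t)) (Hprox t (L t) (leqnn _)).1.
have hfin : forall t, h (z t.+1) \is a fin_num.
  move=> t; have [_ ->] := Hnext t.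
  exact: prox_fin Ph (etzp t (L t)) (Hprox t (L t) (leqnn _)).2.
pose fr u v := f (u, v) + fine (g u) + fine (h v).
have Ffr : forall u v, g u \is a fin_num -> h v \is a fin_num -> F u v = (fr u v)%:E.
  move=> u v; rewrite /F /fr.
  by case: (g u) => [a| |] //; case: (h v) => [b| |] //.
have step : forall t l, (l <= L t)%N -> g (x t) \is a fin_num -> h (z t) \is a fin_num ->
  [/\ g (xtr t l) \is a fin_num, h (ztr t l) \is a fin_num &
  fr (xtr t l) (ztr t l) <= fr (x t) (z t)
     - (rho1 ^+ l * ehx t / 2 - M) * sqn (xtr t l - x t)
     - (rho2 ^+ l * ehz t / 2 - M) * sqn (ztr t l - z t)].
  move=> t l Hl gt ht.
  have [Px Pz] := Hprox t l Hl.
  have ga := prox_fin Pg (etxp t l) Px.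
  have hb := prox_fin Ph (etzp t l) Pz.
  split => //.
  have I1 := prox_ineq (etxp t l) Px (esym (fineK ga)) (esym (fineK gt)).
  rewrite subrr dotv0r sqn0 mulr0 !addr0 in I1.
  have I2 := prox_ineq (etzp t l) Pz (esym (fineK hb)) (esym (fineK ht)).
  rewrite subrr dotv0r sqn0 mulr0 !addr0 in I2.
  have D1 := descent hdiff hgrad M0 hlip (x t) (z t) (xtr t l - x t) 0.
  rewrite addr0 (addrC (x t)) subrK dotv0r sqn0 !addr0 in D1.
  have D2 := descent hdiff hgrad M0 hlip (xtr t l) (z t) 0 (ztr t l - z t).
  rewrite addr0 (addrC (z t)) subrK dotv0r sqn0 add0r addr0 in D2.
  rewrite /fr; lra.
have finpos : forall t, (1 <= t)%N -> g (x t) \is a fin_num /\ h (z t) \is a fin_num.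
  by case=> [|t] //.
have nm_ge : forall t, (F (x t) (z t) <= nm_ref F x z r t)%E.
  move=> t; apply: bigmaxe_ge; apply/andP; split; clear -r1; lia.
have prodbd : forall (K rr e s : R), 0 <= K -> K <= rr -> m <= e -> 0 < 1 - s ->
    K * (m * (1 - s)) <= rr * e * (1 - s).
  move=> K rr e s K0 Kr me s1; rewrite -mulrA; apply: ler_pM => //.
    by rewrite mulr_ge0 // ltW.
  by apply: ler_pM => //; [exact: ltW | exact: ltW].
have testok : forall t l, (1 <= t)%N -> (l <= L t)%N ->
    2 * M <= rho1 ^+ l * ehx t * (1 - sigma1) ->
    2 * M <= rho2 ^+ l * ehz t * (1 - sigma2) ->
    gpalm_test F x z r t sigma1 sigma2 (rho1 ^+ l * ehx t) (rho2 ^+ l * ehz t) (xtr t l) (ztr t l).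
  move=> t l t1 Hl B1 B2.
  have [gt ht] := finpos t t1.
  have [ga hb Hs] := step t l Hl gt ht.
  rewrite /gpalm_test (Ffr _ _ ga hb).
  apply: le_trans (leeB (leeB (nm_ge t) (lexx _)) (lexx _)).
  rewrite (Ffr _ _ gt ht) -!EFinB lee_fin.
  set ex := rho1 ^+ l * ehx t in Hs B1 *; set ez := rho2 ^+ l * ehz t in Hs B2 *.
  have P1 : 0 <= (ex * (1 - sigma1) - 2 * M) * sqn (xtr t l - x t).
    by rewrite mulr_ge0 ?sqn_ge0 // subr_ge0.
  have P2 : 0 <= (ez * (1 - sigma2) - 2 * M) * sqn (ztr t l - z t).
    by rewrite mulr_ge0 ?sqn_ge0 // subr_ge0.
  lra.
have [l1 Hl1] := pow_unbounded (2 * M / (m * (1 - sigma1))) rho1g.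
have [l2 Hl2] := pow_unbounded (2 * M / (m * (1 - sigma2))) rho2g.
pose l0 := maxn l1 l2.
have K10 : 0 <= 2 * M / (m * (1 - sigma1)) by rewrite divr_ge0 ?mulr_ge0 ?ltW // subr_gt0.
have K20 : 0 <= 2 * M / (m * (1 - sigma2)) by rewrite divr_ge0 ?mulr_ge0 ?ltW // subr_gt0.
have r1l0 : 2 * M / (m * (1 - sigma1)) <= rho1 ^+ l0.
  by apply: le_trans Hl1 _; apply: ler_weXn2l; [exact: ltW | exact: leq_maxl].
have r2l0 : 2 * M / (m * (1 - sigma2)) <= rho2 ^+ l0.
  by apply: le_trans Hl2 _; apply: ler_weXn2l; [exact: ltW | exact: leq_maxr].
have Lbd : forall t, (1 <= t)%N -> (L t <= l0)%N.
  move=> t t1; rewrite leqNgt; apply/negP => Hlt.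
  apply: (Hfail t l0 Hlt); apply: testok => //; first exact: ltnW.
    have := prodbd _ _ _ sigma1 K10 r1l0 (proj1 (andP (ehxb t))) (ltac:(lra)).
    by rewrite mulfVK // mulf_neq0 ?gt_eqF // subr_gt0.
  have := prodbd _ _ _ sigma2 K20 r2l0 (proj1 (andP (ehzb t))) (ltac:(lra)).
  by rewrite mulfVK // mulf_neq0 ?gt_eqF // subr_gt0.
pose E := (rho1 ^+ l0 + rho2 ^+ l0) * Hh.
have etxE : forall t, (1 <= t)%N -> rho1 ^+ L t * ehx t <= E.
  move=> t t1; apply: le_trans (_ : rho1 ^+ l0 * Hh <= E).
    apply: ler_pM; [exact: exprn_ge0 (ltW rho10) | by have /andP[hh _] := ehxb t; exact: le_trans (ltW m0) hh | |].
      by apply: ler_weXn2l; [exact: ltW | exact: Lbd].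
    by have /andP[_ hh] := ehxb t.
  by rewrite /E ler_wpM2r ?lerDl ?exprn_ge0 // ?ltW //; lra.
have etzE : forall t, (1 <= t)%N -> rho2 ^+ L t * ehz t <= E.
  move=> t t1; apply: le_trans (_ : rho2 ^+ l0 * Hh <= E).
    apply: ler_pM; [exact: exprn_ge0 (ltW rho20) | by have /andP[hh _] := ehzb t; exact: le_trans (ltW m0) hh | |].
      by apply: ler_weXn2l; [exact: ltW | exact: Lbd].
    by have /andP[_ hh] := ehzb t.
  by rewrite /E ler_wpM2r ?lerDr ?exprn_ge0 // ?ltW //; lra.
pose Frs t := fine (F (x t) (z t)).
pose Ws t := fine (nm_ref F x z r t).
pose Ds t := sqn (x t.+1 - x t) + sqn (z t.+1 - z t).
have Fe : forall t, (1 <= t)%N -> F (x t) (z t) = (Frs t)%:E.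
  by move=> t t1; have [gt ht] := finpos t t1; rewrite /Frs (Ffr _ _ gt ht).
have Frsfr : forall t, (1 <= t)%N -> Frs t = fr (x t) (z t).
  by move=> t t1; have [gt ht] := finpos t t1; rewrite /Frs (Ffr _ _ gt ht).
have nmE : forall t, (r <= t)%N -> nm_ref F x z r t = (Ws t)%:E /\
    exists i, (t.+1 - r <= i <= t)%N /\ Frs i = Ws t.
  move=> t rt.
  have rlt : (t.+1 - r < t.+1)%N by clear -r1; lia.
  have [i [Hi Hb]] := bigmaxe_ex (fun i => F (x i) (z i)) rlt.
  have i1 : (1 <= i)%N by move: Hi rt; clear -r1; lia.
  have nmi : nm_ref F x z r t = (Frs i)%:E by rewrite /nm_ref Hb Fe.
  split; first by rewrite /Ws nmi.
  exists i; split; first by move: Hi; clear; lia.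
  by rewrite /Ws nmi.
have H1 : forall t, (r <= t)%N -> forall i, (t.+1 - r <= i <= t)%N -> Frs i <= Ws t.
  move=> t rt i Hi.
  have i1 : (1 <= i)%N by move: Hi rt; clear -r1; lia.
  have := @bigmaxe_ge R (fun i => F (x i) (z i)) (t.+1 - r) t.+1 i (ltac:(move: Hi; clear; lia)).
  by rewrite -/(nm_ref F x z r t) Fe // (nmE t rt).1 lee_fin.
have H2 : forall t, (r <= t)%N -> exists i, (t.+1 - r <= i <= t)%N /\ Frs i = Ws t.
  by move=> t rt; exact: (nmE t rt).2.
pose cc := m * Num.min sigma1 sigma2 / 2.
have cpos : 0 < cc by rewrite /cc !mulr_gt0 // ?invr_gt0 // lt_min s1a s2a.
have etxm : forall t, m <= rho1 ^+ L t * ehx t.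
  move=> t; have /andP[hh _] := ehxb t; apply: (le_trans hh).
  rewrite ler_peMl //; [exact: le_trans (ltW m0) hh | exact: exprn_ege1 (ltW rho1g)].
have etzm : forall t, m <= rho2 ^+ L t * ehz t.
  move=> t; have /andP[hh _] := ehzb t; apply: (le_trans hh).
  rewrite ler_peMl //; [exact: le_trans (ltW m0) hh | exact: exprn_ege1 (ltW rho2g)].
have mins1 : Num.min sigma1 sigma2 <= sigma1 by rewrite ge_min lexx.
have mins2 : Num.min sigma1 sigma2 <= sigma2 by rewrite ge_min lexx orbT.
have mins0 : 0 <= Num.min sigma1 sigma2 by rewrite le_min !ltW.
have H3 : forall t, (r <= t)%N -> Frs t.+1 <= Ws t - cc * Ds t.
  move=> t rt.
  have T := Htest t.
  rewrite /gpalm_test (Fe t.+1 (ltn0Sn _)) (nmE t rt).1 -!EFinB lee_fin in T.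
  set ex := rho1 ^+ L t * ehx t in T; set ez := rho2 ^+ L t * ehz t in T.
  have q1 : m * Num.min sigma1 sigma2 <= ex * sigma1 by apply: ler_pM => //; [exact: ltW | exact: etxm].
  have q2 : m * Num.min sigma1 sigma2 <= ez * sigma2 by apply: ler_pM => //; [exact: ltW | exact: etzm].
  have u1 : cc * sqn (x t.+1 - x t) <= sigma1 / 2 * ex * sqn (x t.+1 - x t).
    apply: ler_wpM2r; first exact: sqn_ge0.
    rewrite /cc; lra.
  have u2 : cc * sqn (z t.+1 - z t) <= sigma2 / 2 * ez * sqn (z t.+1 - z t).
    apply: ler_wpM2r; first exact: sqn_ge0.
    rewrite /cc; lra.
  rewrite /Ds; lra.
have H4 : forall t, (r <= t)%N -> Frs t.+1 <= Frs t + M * Ds t.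
  move=> t rt.
  have t1 : (1 <= t)%N by move: rt; clear -r1; lia.
  have [gt ht] := finpos t t1.
  have [_ _ Hs] := step t (L t) (leqnn _) gt ht.
  have [ex ez] := Hnext t; rewrite -ex -ez in Hs.
  have P1 : 0 <= rho1 ^+ L t * ehx t / 2 * sqn (x t.+1 - x t)
    by rewrite mulr_ge0 ?sqn_ge0 // divr_ge0 // ltW.
  have P2 : 0 <= rho2 ^+ L t * ehz t / 2 * sqn (z t.+1 - z t)
    by rewrite mulr_ge0 ?sqn_ge0 // divr_ge0 // ltW.
  rewrite (Frsfr t t1) (Frsfr t.+1 (ltn0Sn _)) /Ds; lra.
have D0 : forall t, 0 <= Ds t by move=> t; rewrite addr_ge0 // sqn_ge0.
have Flb : forall t, (r <= t)%N -> c0 <= Frs t.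
  move=> t rt; have t1 : (1 <= t)%N by move: rt; clear -r1; lia.
  by have := Hc0 (x t) (z t); rewrite Fe // lee_fin.
have Dcv := GLL_main r1 cpos (ltW M0) H1 H2 H3 H4 D0 Flb.
have phige : forall k, (k <= phi k)%N.
  elim=> [|k IH] //; exact: leq_ltn_trans IH (phimono k).
pose sk k := (phi (k + 2)%N).-1.
have skS : forall k, (sk k).+1 = phi ((k + 2)%N).
  by move=> k; rewrite /sk prednK //; have := phige ((k + 2)%N); clear; lia.
have sk1 : forall k, (1 <= sk k)%N.
  by move=> k; have := phige ((k + 2)%N); rewrite /sk; clear; lia.
have skk : forall k, (k <= sk k)%N.
  by move=> k; have := phige ((k + 2)%N); rewrite /sk -subn1; clear; lia.
pose ux k := x (sk k).+1; pose wx k := x (sk k).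
pose uz k := z (sk k).+1; pose wz k := z (sk k).
pose etax k := rho1 ^+ L (sk k) * ehx (sk k).
pose etaz k := rho2 ^+ L (sk k) * ehz (sk k).
have Hux : ux @ \oo --> xs.
  have H := cvg_pair_fst Hcvg.
  rewrite -(cvg_shiftn 2) in H.
  have -> : ux = (fun k => x (phi (k + 2)%N)) by apply: funext => k; rewrite /ux skS.
  exact: H.
have Huz : uz @ \oo --> zs.
  have H := cvg_pair_snd Hcvg.
  rewrite -(cvg_shiftn 2) in H.
  have -> : uz = (fun k => z (phi (k + 2)%N)) by apply: funext => k; rewrite /uz skS.
  exact: H.
have HD : (fun k => Ds (sk k)) @ \oo --> (0:R).
  apply/cvgrPdist_lt => e e0.
  have [Nn HN] := Dcv e e0.
  apply: filterS (nbhs_infty_ge Nn) => k hk.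
  rewrite sub0r normrN ger0_norm //; apply: HN; exact: leq_trans hk (skk k).
have dX : (fun k => ux k - wx k) @ \oo --> (0 : 'rV[R]_p).
  apply: cvg_of_sqn; apply: (squeeze_cvgr _ (cvg_cst 0) HD); near=> k.
  rewrite subr0; apply/andP; split; first exact: sqn_ge0.
  by rewrite /Ds lerDl sqn_ge0.
have dZ : (fun k => uz k - wz k) @ \oo --> (0 : 'rV[R]_N).
  apply: cvg_of_sqn; apply: (squeeze_cvgr _ (cvg_cst 0) HD); near=> k.
  rewrite subr0; apply/andP; split; first exact: sqn_ge0.
  by rewrite /Ds lerDr sqn_ge0.
have Hprx : forall k, in_prox g (etax k) (wx k - (etax k)^-1 *: gx (wx k) (wz k)) (ux k).
  move=> k; have [ex _] := Hnext (sk k); rewrite /ux ex.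
  exact: (Hprox (sk k) (L (sk k)) (leqnn _)).1.
have Hprz : forall k, in_prox h (etaz k) (wz k - (etaz k)^-1 *: gz (ux k) (wz k)) (uz k).
  move=> k; have [ex ez] := Hnext (sk k); rewrite /uz /ux ex ez.
  exact: (Hprox (sk k) (L (sk k)) (leqnn _)).2.
have etaxp : forall k, 0 < etax k by move=> k; exact: etxp.
have etazp : forall k, 0 < etaz k by move=> k; exact: etzp.
have etaxE : forall k, etax k <= E by move=> k; exact: etxE (sk1 k).
have etazE : forall k, etaz k <= E by move=> k; exact: etzE (sk1 k).
exact: (final_part hdiff hgrad M0 hlip Pg Ph lscg lsch ddg ddh etaxp etazp etaxE etazE
   Hprx Hprz Hux Huz dX dZ).
Unshelve. all: by end_near.
Qed.
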